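(* Let ${\bf r}=(r_0,r_1,\dots)$ be a finitely supported sequence of nonnegative integers with $n=\sum_{d\ge1}r_d\ge1$ and $\ell=-\sum_{d\ge0}(d-1)r_d\ge1$, and let $k\ge0$ be an integer. Then $$|\mathcal{CF}_{{\bf r},k}|=\binom{n}{r_1,r_2,\dots}\,\ell\,1^{r_1}2^{r_2}3^{r_3}\cdots\prod_{i=1}^{n-1}\big(r_0+i(1+k)\big).$$
   Context: A plane tree is an unlabelled rooted tree in which the children of every vertex are linearly ordered; a plane forest is a finite linearly ordered sequence of plane trees. For vertices $u,v$ in a tree, $v$ is a descendant of $u$ if $u$ lies on the path from the root to $v$ (so $u$ is a descendant of itself). The degree $d_v$ is the number of children of $v$; $v$ is internal if $d_v\ge1$. $I(F)$ is the set of internal vertices of $F$. A plane forest has type ${\bf r}$ if it has exactly $r_i$ vertices of degree $i$ for all $i\ge0$. A labelled forest is a plane forest $F$ together with a bijection (labelling) $I(F)\to[n]$. An internal vertex $v$ of a labelled forest is proper if no internal descendant of $v$ has a smaller label than $v$, and improper otherwise. Fix colors $c_1,c_2,\dots$ and distinct special colors $c_1',c_2',\dots$. A proper $k$-coloring of a labelled forest assigns to each internal vertex $v$ a color, taken from $\{c_1,\dots,c_{d_v}\}$ if $v$ is proper and from $\{c_1,\dots,c_{d_v}\}\cup\{c_1',\dots,c_k'\}$ if $v$ is improper. A $k$-colored labelled forest is a labelled forest together with a proper $k$-coloring; $\mathcal{CF}_{{\bf r},k}$ is the set of $k$-colored labelled forests whose underlying plane forest has type ${\bf r}$. *)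

(* Defs.v *)
From mathcomp Require Import all_boot all_order all_algebra.
From Stdlib Require List.
Set Implicit Arguments. Unset Strict Implicit. Unset Printing Implicit Defensive.
Import GRing.Theory Num.Theory.

(* Colors: [inl i] is the ordinary color c_i, [inr j] is the special color c'_j. *)
Definition color := (nat + nat)%type.

Inductive ctree : Type :=
| CLeaf : ctree
| CNode : nat -> color -> seq ctree -> ctree.

Definition cforest := seq ctree.

Fixpoint labels (t : ctree) : seq nat :=
  match t with
  | CLeaf => [::]
  | CNode l _ ch => l :: flatten (map labels ch)
  end.

Fixpoint degs (t : ctree) : seq nat :=
  match t with
  | CLeaf => [:: 0]
  | CNode _ _ ch => size ch :: flatten (map degs ch)
  end.

Definition forest_labels (F : cforest) : seq nat := flatten (map labels F).
Definition forest_degs (F : cforest) : seq nat := flatten (map degs F).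

(* Well-formedness and proper k-coloring: every vertex stored as [CNode] is
   internal (degree >= 1); its color is c_i with 1 <= i <= d_v, or, if v is
   improper (some internal descendant has a smaller label), c'_j with
   1 <= j <= k. *)
Fixpoint proper_colored (k : nat) (t : ctree) : bool :=
  match t with
  | CLeaf => true
  | CNode l c ch =>
      [&& 0 < size ch,
          match c with
          | inl i => (1 <= i <= size ch)%N
          | inr j => (1 <= j <= k)%N && has (fun m => m < l)%N (flatten (map labels ch))
          end
        & all (proper_colored k) ch]
  end.

(* The set CF_{r,k}: k-colored labelled forests of type r, where
   r_i = nth 0 r i (a finitely supported sequence). The labelling is a
   bijection from the internal vertices onto [n] = {1,...,n}. *)
Definition CF (r : seq nat) (k : nat) (F : cforest) : Prop :=
  [/\ forall i : nat, count_mem i (forest_degs F) = nth 0 r i,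
      perm_eq (forest_labels F) (iota 1 (size (forest_labels F)))
    & all (proper_colored k) F].

Definition card_is (T : Type) (P : T -> Prop) (N : nat) : Prop :=
  exists s : list T, List.NoDup s /\ (forall x, List.In x s <-> P x) /\ length s = N.

Definition nint (r : seq nat) : nat := \sum_(1 <= d < size r) nth 0 r d.

Definition ell (r : seq nat) : int :=
  - \sum_(0 <= d < size r) ((d%:Z - 1) * (nth 0 r d)%:Z)%R.

Definition multinom (r : seq nat) : nat :=
  (nint r)`! %/ \prod_(1 <= d < size r) (nth 0 r d)`!.

Definition degprod (r : seq nat) : nat := \prod_(1 <= d < size r) d ^ (nth 0 r d).

(* Main.v *)
Require Import Defs.
From Stdlib Require List.
From mathcomp Require Import all_boot all_order all_algebra zify ring.
Import GRing.Theory Num.Theory.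
Set Implicit Arguments. Unset Strict Implicit. Unset Printing Implicit Defensive.

Lemma InE (T : eqType) (x : T) s : List.In x s <-> x \in s.
Proof.
elim: s => [|y s IH] //=; rewrite in_cons; split.
- by case=> [->|/IH ->]; rewrite ?eqxx ?orbT.
- by case/orP=> [/eqP ->|/IH]; [left|right].
Qed.

Lemma card_is_ext (T : Type) (P Q : T -> Prop) N :
  (forall x, P x <-> Q x) -> card_is P N -> card_is Q N.
Proof.
move=> H [s [nd [Hs ls]]]; exists s; split=> //; split=> // x.
by rewrite Hs H.
Qed.

Lemma card_is_uniq (T : Type) (P : T -> Prop) N M :
  card_is P N -> card_is P M -> N = M.
Proof.
move=> [s [nd [Hs <-]]] [t [nt [Ht <-]]].
apply/eqP; rewrite eqn_leq; apply/andP; split; apply/leP.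
- apply: (List.NoDup_incl_length nd) => x hx; by apply/Ht/Hs.
- apply: (List.NoDup_incl_length nt) => x hx; by apply/Hs/Ht.
Qed.

Lemma card_is0 (T : Type) (P : T -> Prop) :
  (forall x, ~ P x) -> card_is P 0.
Proof.
move=> H; exists [::]; split; first exact: List.NoDup_nil.
by split=> // x; split=> //= /H.
Qed.

Lemma card_is1 (T : Type) (x0 : T) : card_is (fun x => x = x0) 1.
Proof.
exists [:: x0]; split; first by constructor=> //; constructor.
by split=> // x /=; split; [case=> // | left].
Qed.

Lemma card_is_union (T : Type) (P Q : T -> Prop) N M :
  card_is P N -> card_is Q M -> (forall x, P x -> Q x -> False) ->
  card_is (fun x => P x \/ Q x) (N + M).
Proof.
move=> [s [nd [Hs ls]]] [t [nt [Ht lt]]] D; exists (s ++ t); split.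
  apply: List.NoDup_app => // a /Hs Pa /Ht Qa; exact: D Pa Qa.
split; last by rewrite List.length_app ls lt.
move=> x; rewrite List.in_app_iff Hs Ht //.
Qed.

Lemma card_is_image (A B : Type) (P : A -> Prop) (f : A -> B) N :
  card_is P N -> (forall x y, P x -> P y -> f x = f y -> x = y) ->
  card_is (fun z => exists x, P x /\ z = f x) N.
Proof.
move=> [s [nd [Hs ls]]] inj; exists (List.map f s); split.
  have : forall x, List.In x s -> P x by move=> x /Hs.
  elim: s nd {Hs ls} => [|a s IH] nd Hin /=; first exact: List.NoDup_nil.
  move/List.NoDup_cons_iff: nd => [nin nd].
  constructor; last by apply: IH => // x hx; apply: Hin; right.
  move/List.in_map_iff=> [y [fy ys]].
  have ya : y = a by apply: inj => //; apply: Hin; [right|left].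
  by apply: nin; rewrite -ya.
split; last by rewrite List.length_map.
move=> z; rewrite List.in_map_iff; split.
- by move=> [x [<- /Hs Px]]; exists x.
- by move=> [x [Px ->]]; exists x; split=> //; apply/Hs.
Qed.

Lemma card_is_prod (A B : Type) (P : A -> Prop) (Q : B -> Prop) N M :
  card_is P N -> card_is Q M -> card_is (fun p : A * B => P p.1 /\ Q p.2) (N * M).
Proof.
move=> [s [nd [Hs ls]]] [t [nt [Ht lt]]]; exists (List.list_prod s t); split.
  elim: s nd {Hs ls} => [|a s IH] nd /=; first exact: List.NoDup_nil.
  move/List.NoDup_cons_iff: nd => [nin nd].
  apply: List.NoDup_app; last first.
    move=> [x y] /List.in_map_iff [z [[<- _] _]] /List.in_prod_iff [ins _].
    exact: nin.
  - exact: IH.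
  clear IH Ht lt.
  elim: t nt => [|b t IHt] nt /=; first exact: List.NoDup_nil.
  move/List.NoDup_cons_iff: nt => [nin' nt]; constructor; last exact: IHt.
  by move/List.in_map_iff=> [z [[zb] zt]]; apply: nin'; rewrite -zb.
split; last by rewrite List.length_prod ls lt.
by move=> [a b]; rewrite List.in_prod_iff Hs Ht.
Qed.

Lemma card_is_range a n : card_is (fun x => a <= x < a + n) n.
Proof.
exists (iota a n); split; last split; last by rewrite -[length _]/(size _) size_iota.
  elim: n a => [|n IH] a /=; first exact: List.NoDup_nil.
  constructor; last exact: IH.
  by rewrite InE mem_iota ltnn.
by move=> x; rewrite InE mem_iota.
Qed.

Lemma card_is_range2 a b : card_is (fun x => a <= x < b) (b - a).
Proof.
case: (leqP a b) => hab.
  apply: card_is_ext (card_is_range a (b - a)) => x; by rewrite subnKC.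
have -> : b - a = 0 by lia.
by apply: card_is0 => x; lia.
Qed.

Lemma card_is_bigU (T : Type) (P : nat -> T -> Prop) (N : nat -> nat) a b :
  (forall i, a <= i < b -> card_is (P i) (N i)) ->
  (forall i j x, a <= i < b -> a <= j < b -> P i x -> P j x -> i = j) ->
  card_is (fun x => exists i, a <= i < b /\ P i x) (\sum_(a <= i < b) N i).
Proof.
move=> HC HD; elim: b HC HD => [|b IH] HC HD.
  by rewrite big_geq //; apply: card_is0 => x [i]; lia.
case: (leqP a b) => hab; last first.
  rewrite big_geq //; apply: card_is0 => x [i]; lia.
rewrite big_nat_recr //=.
have IH' : card_is (fun x => exists i, a <= i < b /\ P i x) (\sum_(a <= i < b) N i).
  apply: IH => [i hi|i j x hi hj]; [apply: HC; lia| apply: HD; lia].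
have Hb : card_is (P b) (N b) by apply: HC; lia.
have U := card_is_union IH' Hb.
apply: card_is_ext; last apply: U.
- move=> x; split.
  + by case=> [[i [hi Pi]]|Pb]; [exists i; split=> //; lia | exists b; split=> //; lia].
  + move=> [i [hi Pi]]; case: (ltnP i b) => hib.
      by left; exists i; split=> //; lia.
    by right; have <- : i = b by lia.
- move=> x [i [hi Pi]] Pb; have E := HD i b x ltac:(lia) ltac:(lia) Pi Pb; lia.
Qed.


Fixpoint ctree_ind2 (P : ctree -> Prop) (HL : P CLeaf)
  (HN : forall l c ch, List.Forall P ch -> P (CNode l c ch)) (t : ctree) : P t :=
  match t with
  | CLeaf => HL
  | CNode l c ch => HN l c ch
      ((fix aux (s : seq ctree) : List.Forall P s :=
          match s with
          | [::] => List.Forall_nil P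
          | x :: s' => List.Forall_cons x (ctree_ind2 HL HN x) (aux s')
          end) ch)
  end.

Fixpoint relab (f : nat -> nat) (t : ctree) : ctree :=
  match t with
  | CLeaf => CLeaf
  | CNode l c ch => CNode (f l) c (map (relab f) ch)
  end.

Lemma labels_relab f t : labels (relab f t) = map f (labels t).
Proof.
elim/ctree_ind2: t => //= l c ch IH; congr (_ :: _).
elim: ch IH => //= x ch IHch /List.Forall_cons_iff [Hx IH].
by rewrite map_cat Hx IHch.
Qed.

Lemma degs_relab f t : degs (relab f t) = degs t.
Proof.
elim/ctree_ind2: t => //= l c ch IH; rewrite size_map; congr (_ :: _).
elim: ch IH => //= x ch IHch /List.Forall_cons_iff [Hx IH].
by rewrite Hx IHch.
Qed.

Lemma relab_comp f g t : relab f (relab g t) = relab (f \o g) t.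
Proof.
elim/ctree_ind2: t => //= l c ch IH; congr (CNode _ _ _).
elim: ch IH => //= x ch IHch /List.Forall_cons_iff [Hx IH].
by rewrite Hx IHch.
Qed.

Lemma relab_eq f g t : (forall x, x \in labels t -> f x = g x) -> relab f t = relab g t.
Proof.
elim/ctree_ind2: t => //= l c ch IH H; rewrite H ?mem_head //; congr (CNode _ _ _).
have H' : forall x, x \in flatten (map labels ch) -> f x = g x.
  by move=> x hx; apply: H; rewrite in_cons hx orbT.
elim: ch IH H' {H} => //= x ch IHch /List.Forall_cons_iff [Hx IH] H.
rewrite Hx ?IHch // => y hy; apply: H; rewrite mem_cat hy ?orbT //.
Qed.

Lemma relab_id t : relab id t = t.
Proof.
elim/ctree_ind2: t => //= l c ch IH; congr (CNode _ _ _).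
elim: ch IH => //= x ch IHch /List.Forall_cons_iff [Hx IH].
by rewrite Hx IHch.
Qed.

Lemma proper_relab k f t : (forall x y, (f x < f y) = (x < y)) ->
  proper_colored k (relab f t) = proper_colored k t.
Proof.
move=> Hf; elim/ctree_ind2: t => //= l c ch IH; rewrite size_map.
have -> : flatten (map labels (map (relab f) ch)) = map f (flatten (map labels ch)).
  by rewrite map_flatten -map_comp -map_comp; congr flatten; apply: eq_map => x /=; rewrite labels_relab.
rewrite has_map.
have -> : has (preim f (fun m => m < f l)) (flatten (map labels ch)) = has (fun m => m < l) (flatten (map labels ch)).
  by apply: eq_has => x /=; rewrite Hf.
congr [&& _, _ & _].
elim: ch IH => //= x ch IHch /List.Forall_cons_iff [Hx IH].
by rewrite Hx IHch.
Qed.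

Lemma size_degs t : size (degs t) = (sumn (degs t)).+1.
Proof.
elim/ctree_ind2: t => //= l c ch IH; congr S.
elim: ch IH => //= x ch IHch /List.Forall_cons_iff [Hx IH].
rewrite size_cat sumn_cat Hx (IHch IH); lia.
Qed.

Lemma size_labels k t : proper_colored k t -> size (labels t) = count (leq 1) (degs t).
Proof.
elim/ctree_ind2: t => //= l c ch IH /and3P [pos _ all]; rewrite pos /=; congr S.
elim: ch IH all {pos} => //= x ch IHch /List.Forall_cons_iff [Hx IH] /andP [px pch].
by rewrite size_cat count_cat Hx // IHch.
Qed.

Definition up (l x : nat) := if x < l then x else x.+1.
Definition down (l x : nat) := if x < l then x else x.-1.

Lemma downK l x : down l (up l x) = x.
Proof.
rewrite /up /down; case: (ltnP x l) => h; first by rewrite h.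
have -> : (x.+1 < l) = false by apply/negbTE; rewrite -leqNgt; lia.
by [].
Qed.

Lemma upK l x : x != l -> up l (down l x) = x.
Proof.
rewrite /up /down => h; case: (ltnP x l) => h1; first by rewrite h1.
have -> : (x.-1 < l) = false by apply/negbTE; rewrite -leqNgt; lia.
lia.
Qed.

Lemma up_mono l x y : (up l x < up l y) = (x < y).
Proof. rewrite /up; case: (ltnP x l) => hx; case: (ltnP y l) => hy; lia. Qed.


Lemma count_sum (g : nat -> nat) s m : all (fun x => x < m) s ->
  sumn (map g s) = \sum_(0 <= i < m) g i * count_mem i s.
Proof.
elim: s => [|x s IH] /=.
  by rewrite big1 // => i _; rewrite muln0.
move=> /andP [xm al]; rewrite IH //.
have -> : \sum_(0 <= i < m) g i * ((x == i) + count_mem i s) =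
          \sum_(0 <= i < m) g i * (x == i) + \sum_(0 <= i < m) g i * count_mem i s.
  by rewrite -big_split /=; apply: eq_bigr => i _; rewrite mulnDr.
congr (_ + _).
have hx : x \in index_iota 0 m by rewrite mem_index_iota; lia.
rewrite (bigD1_seq x hx (iota_uniq _ _)) /=.
rewrite eqxx muln1 big1 ?addn0 // => i /negbTE; rewrite eq_sym => ->; by rewrite muln0.
Qed.

Definition dec (r : seq nat) d := set_nth 0 r d (nth 0 r d).-1.

Lemma nth_dec r d i : nth 0 (dec r d) i = if i == d then (nth 0 r d).-1 else nth 0 r i.
Proof. by rewrite /dec nth_set_nth /=. Qed.

Lemma size_dec r d : d < size r -> size (dec r d) = size r.
Proof. move=> h; rewrite /dec size_set_nth; lia. Qed.

Lemma big_dec (R : Type) (idx : R) (op : Monoid.com_law idx) (g : nat -> nat -> R) r d a :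
  a <= d < size r ->
  \big[op/idx]_(a <= i < size r) g i (nth 0 (dec r d) i) =
  op (g d (nth 0 r d).-1) (\big[op/idx]_(a <= i < size r | i != d) g i (nth 0 r i)).
Proof.
move=> h; rewrite (bigD1_seq d) /= ?mem_index_iota ?iota_uniq //.
rewrite nth_dec eqxx; congr (op _ _); apply: eq_bigr => i /negbTE ne.
by rewrite nth_dec ne.
Qed.

Lemma big_at (R : Type) (idx : R) (op : Monoid.com_law idx) (F : nat -> R) b d a :
  a <= d < b ->
  \big[op/idx]_(a <= i < b) F i = op (F d) (\big[op/idx]_(a <= i < b | i != d) F i).
Proof. by move=> h; rewrite (bigD1_seq d) /= ?mem_index_iota ?iota_uniq. Qed.

Arguments big_at {R idx} op {F b d a}.
Arguments big_dec {R idx} op g {r d a}.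

Lemma nint_dec r d : 1 <= d < size r -> 0 < nth 0 r d -> nint (dec r d) = (nint r).-1.
Proof.
move=> h p; rewrite /nint size_dec; last lia.
rewrite (big_dec _ (fun i x => x)) // (big_at _ h) /=; lia.
Qed.

Lemma ell_dec r d : 1 <= d < size r -> 0 < nth 0 r d ->
  ell (dec r d) = (ell r + Posz d - 1)%R.
Proof.
move=> h p; rewrite /ell size_dec; last lia.
rewrite (big_dec _ (fun i x => ((Posz i - 1) * Posz x)%R)); last lia.
rewrite (@big_at _ _ _ (fun i => ((Posz i - 1) * Posz (nth 0 r i))%R) _ d); last lia.
have -> : Posz (nth 0 r d).-1 = (Posz (nth 0 r d) - 1)%R by rewrite predn_int.
set S := (\sum_(_ <= _ < _ | _) _)%R.
rewrite !opprD; ring.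
Qed.

Lemma nth0_dec r d : 0 < d -> nth 0 (dec r d) 0 = nth 0 r 0.
Proof. by move=> h; rewrite nth_dec; case: eqP => // e; rewrite -e in h. Qed.

Definition Dcond (r : seq nat) (F : cforest) :=
  forall i, count_mem i (forest_degs F) = nth 0 r i.

Lemma degs_lt r F : Dcond r F -> all (fun x => x < size r) (forest_degs F).
Proof.
move=> D; apply/allP => x hx; case: (ltnP x (size r)) => // hge.
have := D x; rewrite nth_default //.
by move/eqP; rewrite -[_ == 0]negbK -lt0n -has_count has_pred1 hx.
Qed.

Lemma size_forest_degs F : size (forest_degs F) = size F + sumn (forest_degs F).
Proof.
elim: F => //= t F IH; rewrite /forest_degs /= size_cat sumn_cat.
rewrite -/(forest_degs F) IH size_degs; lia.
Qed.

Lemma size_forest_labels k F : all (proper_colored k) F ->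
  size (forest_labels F) = count (leq 1) (forest_degs F).
Proof.
elim: F => //= t F IH /andP [pt pF].
rewrite /forest_labels /forest_degs /= size_cat count_cat (size_labels pt).
by rewrite -/(forest_labels F) -/(forest_degs F) IH.
Qed.

Lemma sizes_D r F : Dcond r F ->
  [/\ size (forest_degs F) = \sum_(0 <= i < size r) nth 0 r i,
      sumn (forest_degs F) = \sum_(0 <= i < size r) i * nth 0 r i
    & count (leq 1) (forest_degs F) = \sum_(0 <= i < size r) (0 < i) * nth 0 r i].
Proof.
move=> D; have al := degs_lt D; split.
- have -> : size (forest_degs F) = sumn (map (fun _ => 1) (forest_degs F)).
    by elim: (forest_degs F) => //= ? ? ->.
  rewrite (count_sum (fun _ => 1) al); apply: eq_bigr => i _; by rewrite D mul1n.
- have -> : sumn (forest_degs F) = sumn (map id (forest_degs F)) by rewrite map_id.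
  rewrite (count_sum id al).
  by apply: eq_bigr => i _; rewrite D.
- rewrite -sumn_count (count_sum (fun x => nat_of_bool (leq 1 x)) al).
  by apply: eq_bigr => i _; rewrite D.
Qed.

Lemma CF_size_labels r k F : CF r k F -> size (forest_labels F) = nint r.
Proof.
case=> D _ al; rewrite (size_forest_labels al); case: (sizes_D D) => _ _ ->.
rewrite /nint; case: (posnP (size r)) => [->|hs]; first by rewrite !big_geq.
rewrite big_ltn //= mul0n add0n; apply: eq_big_nat => i hi; have -> : 0 < i by lia. by rewrite mul1n.
Qed.

Lemma CF_size r k F : CF r k F -> Posz (size F) = ell r.
Proof.
case=> D _ _; have := size_forest_degs F; case: (sizes_D D) => -> -> _ E.
have -> : size F = \sum_(0 <= i < size r) nth 0 r i - \sum_(0 <= i < size r) i * nth 0 r i by lia.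
rewrite /ell -sumrN.
have le : \sum_(0 <= i < size r) i * nth 0 r i <= \sum_(0 <= i < size r) nth 0 r i by lia.
rewrite -(subzn le) !(big_morph Posz PoszD (erefl (Posz 0))) -sumrB; apply: eq_bigr => i _.
rewrite PoszM; ring.
Qed.

Import Order.TTheory.

Definition Yq r k q (F : cforest) := CF r k F /\ 1 \in labels (nth CLeaf F q).
Definition Yt r k j (F : cforest) := CF r k F /\ 1 \in forest_labels (take j F).

Lemma all_rot_ (T : Type) (p : pred T) n s : all p (rot n s) = all p s.
Proof. by rewrite /rot all_cat andbC -all_cat cat_take_drop. Qed.

Lemma CF_rot r k n F : CF r k F -> CF r k (rot n F).
Proof.
case=> D L A; split.
- move=> i; rewrite -D; apply: (permP _).
  by rewrite /forest_degs map_rot; apply: perm_flatten; rewrite perm_rot.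
- have P : perm_eq (forest_labels (rot n F)) (forest_labels F).
    by rewrite /forest_labels map_rot; apply: perm_flatten; rewrite perm_rot.
  by rewrite (perm_size P) (perm_trans P L).
- by rewrite all_rot_.
Qed.

Lemma nth_rot0 (T : Type) (x0 : T) q s : q < size s -> nth x0 (rot q s) 0 = nth x0 s q.
Proof.
move=> h; rewrite /rot nth_cat size_drop subn_gt0 h nth_drop addn0 //.
Qed.

Lemma card_Yq r k q N : (Posz q < ell r)%R -> card_is (Yq r k 0) N -> card_is (Yq r k q) N.
Proof.
move=> hq C; have C2 := card_is_image (f:=rotr q) C.
apply: card_is_ext (C2 _).
  move=> F; split.
  - move=> [G [[cg hg] ->]]; have hs : q < size (rotr q G).
      by rewrite size_rotr -ltz_nat (CF_size cg).
    split; first by rewrite /rotr; apply: CF_rot.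
    by rewrite -(nth_rot0 _ hs) rotrK.
  - move=> [cf hf]; have hs : q < size F by rewrite -ltz_nat (CF_size cf).
    exists (rot q F); split; last by rewrite rotK.
    by split; [apply: CF_rot | rewrite nth_rot0].
by move=> x y _ _ e; rewrite -(rotrK q x) e rotrK.
Qed.

Lemma CF_uniq r k F : CF r k F -> uniq (forest_labels F).
Proof. by case=> _ L _; rewrite (perm_uniq L) iota_uniq. Qed.

Lemma card_Yt r k j N : (Posz j <= ell r)%R -> card_is (Yq r k 0) N -> card_is (Yt r k j) (j * N).
Proof.
move=> hj C; elim: j hj => [|j IH] hj.
  by apply: card_is0 => F [_]; rewrite take0.
have hj' : (Posz j < ell r)%R by lia.
have disj : forall F, Yt r k j F -> Yq r k j F -> False.
  move=> F [cf h1] [_ h2]; have := CF_uniq cf.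
  have hs : j < size F by rewrite -ltz_nat (CF_size cf).
  rewrite /forest_labels -{1}(cat_take_drop j F) (drop_nth CLeaf hs) map_cat flatten_cat /=.
  by rewrite cat_uniq => /and3P [_ /hasPn H _]; move: (H 1); rewrite mem_cat h2 /= => /(_ isT); rewrite h1.
have U := card_is_union (IH ltac:(lia)) (card_Yq hj' C) disj.
rewrite mulSn addnC; apply: (card_is_ext _ U) => F0.
have lab : forall F, CF r k F -> forest_labels (take j.+1 F) = forest_labels (take j F) ++ labels (nth CLeaf F j).
  move=> F cf; have hs : j < size F by rewrite -ltz_nat (CF_size cf).
  by rewrite (take_nth CLeaf hs) /forest_labels -cats1 map_cat flatten_cat /= cats0.
split.
- by case=> [[cf h]|[cf h]]; split=> //; rewrite lab // mem_cat h ?orbT.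
- by move=> [cf]; rewrite lab // mem_cat => /orP [h|h]; [left|right].
Qed.

Lemma card_CF_Y r k N : (1 <= nint r)%N -> (0 <= ell r)%R -> card_is (Yq r k 0) N ->
  card_is (CF r k) (absz (ell r) * N).
Proof.
move=> hn he C; have hz : Posz (absz (ell r)) = ell r by rewrite gez0_abs.
have := card_Yt (j := absz (ell r)) (k := k) _ C; rewrite hz => /(_ (lexx _)).
apply: card_is_ext => F; split; first by case.
move=> cf; split=> //; have hs : size F = absz (ell r) by apply/eqP; rewrite -eqz_nat hz (CF_size cf).
rewrite -hs take_size; have sl := CF_size_labels cf; case: cf => _ L _.
by rewrite (perm_mem L) mem_iota sl; lia.
Qed.


Lemma up_inj l : injective (up l).
Proof. exact: can_inj (@downK l). Qed.

Lemma perm_up l m : 1 <= l <= m.+1 ->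
  perm_eq (l :: map (up l) (iota 1 m)) (iota 1 m.+1).
Proof.
move=> hl; apply: uniq_perm.
- rewrite /= (map_inj_uniq (@up_inj l)) iota_uniq andbT.
  apply/mapP => [[x _]]; rewrite /up; case: ifP => h e; lia.
- exact: iota_uniq.
move=> x; rewrite in_cons mem_iota; apply/idP/idP.
- case/orP=> [/eqP ->|/mapP [y]]; first lia.
  rewrite mem_iota /up => hy ->; case: ifP => h; lia.
- move=> hx; case: (eqVneq x l) => [->|ne] //=.
  apply/mapP; exists (down l x); last by rewrite upK.
  rewrite mem_iota /down; case: ifP => h; lia.
Qed.

Lemma flabels_cat F G : forest_labels (F ++ G) = forest_labels F ++ forest_labels G.
Proof. by rewrite /forest_labels map_cat flatten_cat. Qed.

Lemma fdegs_cat F G : forest_degs (F ++ G) = forest_degs F ++ forest_degs G.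
Proof. by rewrite /forest_degs map_cat flatten_cat. Qed.

Lemma flabels_relab f F : forest_labels (map (relab f) F) = map f (forest_labels F).
Proof.
rewrite /forest_labels map_flatten -map_comp -map_comp; congr flatten.
by apply: eq_map => t /=; rewrite labels_relab.
Qed.

Lemma fdegs_relab f F : forest_degs (map (relab f) F) = forest_degs F.
Proof.
by rewrite /forest_degs -map_comp; congr flatten; apply: eq_map => t; exact: degs_relab.
Qed.

Lemma relab_downK l F : map (relab (down l)) (map (relab (up l)) F) = F.
Proof.
rewrite -map_comp -[RHS]map_id; apply: eq_map => t /=.
by rewrite relab_comp (@relab_eq _ id) ?relab_id // => x _ /=; rewrite downK.
Qed.

Lemma relab_upK l F : l \notin forest_labels F ->
  map (relab (up l)) (map (relab (down l)) F) = F.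
Proof.
elim: F => //= t F IH; rewrite /forest_labels /= mem_cat negb_or => /andP [h1 h2].
rewrite IH // relab_comp (@relab_eq _ id) ?relab_id // => x hx /=.
rewrite upK //; apply: contraNneq h1 => <- //.
Qed.

Lemma all_proper_relab k f F : (forall x y, (f x < f y) = (x < y)) ->
  all (proper_colored k) (map (relab f) F) = all (proper_colored k) F.
Proof. by move=> hf; rewrite all_map; apply: eq_all => t /=; rewrite proper_relab. Qed.

Definition colO d (c : color) := exists i, c = inl i /\ 1 <= i <= d.
Definition colI d k (c : color) := colO d c \/ exists j, c = inr j /\ 1 <= j <= k.

Definition Bmap (p : nat * nat * color * cforest) : cforest :=
  let: (d, l, c, G) := p in
  let X := map (relab (up l)) G in CNode l c (take d X) :: drop d X.

Definition PP r k (p : nat * nat * color * cforest) : Prop :=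
  let: (d, l, c, G) := p in
  [/\ 1 <= d < size r, 0 < nth 0 r d, CF (dec r d) k G &
     (l = 1 /\ colO d c) \/
     ([/\ 2 <= l <= nint r, colI d k c & 1 \in forest_labels (take d G)])].

Lemma PP_size r k d l c G : (1 <= ell r)%R -> PP r k (d, l, c, G) -> d <= size G.
Proof.
move=> he [hd pd cf _]; have := CF_size cf; rewrite ell_dec //.
move=> e; rewrite -lez_nat e; lia.
Qed.

Lemma Bmap_inj r k p1 p2 : (1 <= ell r)%R -> PP r k p1 -> PP r k p2 -> Bmap p1 = Bmap p2 -> p1 = p2.
Proof.
case: p1 => [[[d1 l1] c1] G1]; case: p2 => [[[d2 l2] c2] G2] he P1 P2.
have s1 := PP_size he P1; have s2 := PP_size he P2.
rewrite /Bmap => -[el ec et ed]; subst l2 c2.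
have ed2 : d1 = d2.
  by have := congr1 size et; rewrite !size_takel ?size_map.
subst d2; have eX : map (relab (up l1)) G1 = map (relab (up l1)) G2.
  by rewrite -(cat_take_drop d1 (map _ G1)) et ed cat_take_drop.
by rewrite -(relab_downK l1 G1) eX relab_downK.
Qed.

Lemma Bmap_labels d l c G :
  forest_labels (Bmap (d, l, c, G)) = l :: map (up l) (forest_labels G).
Proof.
rewrite /Bmap; set X := map _ G.
have -> : forest_labels (CNode l c (take d X) :: drop d X) = l :: forest_labels (take d X ++ drop d X).
  by rewrite flabels_cat.
by rewrite cat_take_drop flabels_relab.
Qed.

Lemma Bmap_degs d l c G : d <= size G ->
  forest_degs (Bmap (d, l, c, G)) = d :: forest_degs G.
Proof.
move=> h; rewrite /Bmap; set X := map _ G.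
have -> : forest_degs (CNode l c (take d X) :: drop d X) = size (take d X) :: forest_degs (take d X ++ drop d X).
  by rewrite fdegs_cat.
by rewrite cat_take_drop fdegs_relab size_takel // size_map.
Qed.

Lemma Bmap_Y r k p : (1 <= ell r)%R -> PP r k p -> Yq r k 0 (Bmap p).
Proof.
case: p => [[[d l] c] G] he P; have sG := PP_size he P.
case: P => hd pd cf hc.
have nG := CF_size_labels cf; rewrite nint_dec // in nG.
have l1 : 1 \in forest_labels (take d (map (relab (up l)) G)) -> 1 < l ->
   has (fun m => m < l) (flatten (map labels (take d (map (relab (up l)) G)))).
  by move=> h1 h2; apply/hasP; exists 1.
have t1 : 1 < l -> 1 \in forest_labels (take d G) -> 1 \in forest_labels (take d (map (relab (up l)) G)).
  move=> h1 h2; rewrite -map_take flabels_relab; apply/mapP; exists 1 => //.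
  by rewrite /up h1.
have hn : 1 <= nint r by rewrite /nint (big_at _ (d := d)) //=; lia.
have hl : 1 <= l <= nint r by case: hc => [[-> _]|[]]; lia.
split; last first.
  rewrite /Bmap /= in_cons; case: hc => [[-> _]|[h2 _ h3]] //.
  by rewrite t1 ?orbT //; lia.
split.
- move=> i; rewrite Bmap_degs //=.
  case: cf => D _ _; rewrite D nth_dec; case: (eqVneq i d) => [->|ne] /=; lia.
- rewrite Bmap_labels /= size_map nG.
  have PU := perm_up (l:=l) (m:=(nint r).-1) ltac:(lia).
  apply: perm_trans PU.
  rewrite perm_cons; apply: perm_map; case: cf => _ L _; by rewrite nG in L.
- rewrite /Bmap /=; case: cf => _ _ A.
  have AX : all (proper_colored k) (map (relab (up l)) G) by rewrite all_proper_relab // => x y; exact: up_mono.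
  rewrite -(cat_take_drop d (map (relab (up l)) G)) all_cat in AX.
  case/andP: AX => Atake Adrop; rewrite Atake Adrop !andbT size_takel ?size_map //.
  apply/andP; split; first lia.
  case: hc => [[-> [i [-> hi]]]|[h2 [[i [-> hi]]|[j [-> hj]]] h3]] //.
  by apply/andP; split; [lia| apply: l1; [apply: t1|]; lia].
Qed.

Lemma Y_Bmap r k F : Yq r k 0 F -> exists p, PP r k p /\ F = Bmap p.
Proof.
case=> cf h1; case: F cf h1 => [|t rest] //= cf h1.
case: t cf h1 => [|l c ch] //= cf h1.
set d := size ch; set X := ch ++ rest; set G := map (relab (down l)) X.
have U := CF_uniq cf.
have FL : forest_labels (CNode l c ch :: rest) = l :: forest_labels X.
  by rewrite flabels_cat.
have FD : forest_degs (CNode l c ch :: rest) = d :: forest_degs X.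
  by rewrite fdegs_cat.
have nl : l \notin forest_labels X by move: U; rewrite FL /= => /andP [].
have XG : map (relab (up l)) G = X by rewrite relab_upK.
have sl := CF_size_labels cf.
case: cf => D L A.
have pr : proper_colored k (CNode l c ch) by case/andP: A.
case/and3P: pr => dpos hcol Ach.
have Arest : all (proper_colored k) rest by case/andP: A.
have pd : 0 < nth 0 r d.
  by rewrite -D FD /= eqxx.
have dlt : d < size r by case: (ltnP d (size r)) => // h; move: pd; rewrite nth_default.
have lin : l \in iota 1 (nint r) by rewrite -sl -(perm_mem L) FL mem_head.
rewrite mem_iota in lin.
exists (d, l, c, G); split; last first.
  rewrite /Bmap XG /X take_size_cat // drop_size_cat //.
split=> //; first lia.
- split.
  + move=> i; rewrite nth_dec fdegs_relab; have := D i; rewrite FD /=.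
    case: (eqVneq i d) => [->|ne] /=; lia.
  + have e1 : size (forest_labels G) = (nint r).-1.
      by rewrite flabels_relab size_map; move: sl; rewrite FL /=; lia.
    rewrite e1.
    have PU := perm_up (l:=l) (m:=(nint r).-1) ltac:(lia).
    have hz : (nint r).-1.+1 = nint r by lia.
    rewrite hz in PU.
    apply: (perm_map_inj (@up_inj l)); rewrite -(perm_cons l).
    apply: (@perm_trans _ (iota 1 (nint r))); last by rewrite perm_sym.
    by rewrite -flabels_relab XG -FL -sl.
  + by rewrite -(@all_proper_relab k (up l) G (@up_mono l)) XG all_cat Ach.
- have lab1 : 1 \in labels (CNode l c ch) by [].
  case: (eqVneq l 1) => [el|ne].
    left; split=> //; case E: c hcol => [i|j] /= hcol.
      by exists i.
    move: hcol; rewrite el => /andP [_ /hasP [x xin hx]].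
    have : x \in iota 1 (nint r).
      by rewrite -sl -(perm_mem L) FL in_cons /X flabels_cat mem_cat xin !orbT.
    rewrite mem_iota; lia.
  right; split; first lia.
  + case E: c hcol => [i|j] /= h.
      by left; exists i.
    by right; exists j; case/andP: h.
  + move: h1; rewrite in_cons eq_sym (negbTE ne) /= => h1.
    rewrite -map_take /X take_size_cat // flabels_relab; apply/mapP; exists 1 => //.
    by rewrite /down; case: ifP => //; lia.
Qed.


Lemma card_colO d : card_is (colO d) d.
Proof.
have C := card_is_image (f := fun i : nat => (inl i : color)) (card_is_range 1 d).
apply: card_is_ext (C _) => [c|]; last by move=> x y _ _ [].
split; first by move=> [i [hi ->]]; exists i; split=> //; lia.
by move=> [i [-> hi]]; exists i; split=> //; lia.
Qed.

Lemma card_colI d k : card_is (colI d k) (d + k).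
Proof.
have C := card_is_image (f := fun i : nat => (inr i : color)) (card_is_range 1 k).
have U := card_is_union (card_colO d) (C ltac:(by move=> x y _ _ [])).
apply: card_is_ext (U _) => [c|]; last by move=> x [i [-> _]] [j [_ e]].
split.
- case=> [h|[j [hj ->]]]; first by left.
  by right; exists j; split=> //; lia.
- case=> [h|[j [-> hj]]]; first by left.
  by right; exists j; split=> //; lia.
Qed.

Lemma card_PPd r k d Cf Tf : 1 <= d < size r -> 0 < nth 0 r d ->
  card_is (CF (dec r d) k) Cf -> card_is (Yt (dec r d) k d) Tf ->
  card_is (fun p : nat * nat * color * cforest => p.1.1.1 = d /\ PP r k p)
    (d * Cf + (nint r).-1 * (d + k) * Tf).
Proof.
move=> hd pd CC CT.
have C1 := card_is_image (f := fun q : color * cforest => (d, 1, q.1, q.2)) (card_is_prod (card_colO d) CC).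
have R2 : card_is (fun l => 2 <= l < (nint r).+1) (nint r).-1.
  by have := card_is_range2 2 (nint r).+1; rewrite subSS subn1.
have C2 := card_is_image (f := fun q : nat * color * cforest => (d, q.1.1, q.1.2, q.2))
   (card_is_prod (card_is_prod R2 (card_colI d k)) CT).
have U := card_is_union (C1 ltac:(by move=> [? ?] [? ?] _ _ [-> ->]))
                        (C2 ltac:(by move=> [[? ?] ?] [[? ?] ?] _ _ [-> -> ->])).
apply: card_is_ext (U _).
- move=> [[[d' l] c] G]; split.
  + case=> [[[c' G'] [[hc cf] [-> -> -> ->]]]|[[[l' c'] G'] [[[hl hc] [cf h1]] [-> -> -> ->]]]].
      by split=> //; split=> //; left.
    split=> //; split=> //; right; split=> //; lia.
  + move=> /= [-> [_ _ cf [[-> hc]|[hl hc h1]]]].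
      by left; exists (c, G).
    right; exists (l, c, G) => /=; split; last by [].
    split; last by split.
    split=> //; lia.
- move=> p [[c G] [_ ->]] [[[l c'] G'] [[[hl _] _] /= E]]; case: E => E1 _ _; move: hl => /=; lia.
Qed.

Lemma card_Y0 r k (Cf Tf : nat -> nat) : (1 <= ell r)%R ->
  (forall d, 1 <= d < size r -> 0 < nth 0 r d -> card_is (CF (dec r d) k) (Cf d)) ->
  (forall d, 1 <= d < size r -> 0 < nth 0 r d -> card_is (Yt (dec r d) k d) (Tf d)) ->
  card_is (Yq r k 0) (\sum_(1 <= d < size r)
     (if 0 < nth 0 r d then d * Cf d + (nint r).-1 * (d + k) * Tf d else 0)).
Proof.
move=> he HC HT.
have H := @card_is_bigU _ (fun d (p : nat * nat * color * cforest) => p.1.1.1 = d /\ PP r k p)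
  (fun d => if 0 < nth 0 r d then d * Cf d + (nint r).-1 * (d + k) * Tf d else 0) 1 (size r).
have H1 : card_is (PP r k) (\sum_(1 <= d < size r)
     (if 0 < nth 0 r d then d * Cf d + (nint r).-1 * (d + k) * Tf d else 0)).
  apply: card_is_ext (H _ _).
  - move=> [[[d l] c] G]; split; first by move=> [i [_ [_ P]]].
    by move=> P; exists d; split=> //; case: P.
  - move=> d hd; case: ifP => pd.
      by apply: card_PPd => //; [apply: HC | apply: HT].
    apply: card_is0 => [[[[d1 l] c] G]] /= [E P]; case: P => _ p _ _; by rewrite -E p in pd.
  - by move=> i j x _ _ [<- _] [<- _].
have H2 := card_is_image (f := Bmap) H1.
apply: card_is_ext (H2 _); last by move=> x y px py; apply: (Bmap_inj he px py).
move=> F; split; first by move=> [p [pp ->]]; apply: Bmap_Y.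
exact: Y_Bmap.
Qed.


Definition FP r := \prod_(1 <= d < size r) (nth 0 r d)`!.

Lemma FP_dvd r m : \prod_(1 <= d < m) (nth 0 r d)`! %| (\sum_(1 <= d < m) nth 0 r d)`!.
Proof.
elim: m => [|m IH]; first by rewrite !big_geq.
case: (leqP 1 m) => hm; last by rewrite !big_geq.
rewrite !big_nat_recr //=.
set S := \sum_(1 <= d < m) _; set x := nth 0 r m.
have <- : 'C(S + x, x) * (x`! * (S + x - x)`!) = (S + x)`! by rewrite bin_fact // leq_addl.
rewrite addnK; apply: dvdn_mull; rewrite [x`! * _]mulnC; exact: dvdn_mul IH (dvdnn _).
Qed.

Lemma multinomE r : multinom r * FP r = (nint r)`!.
Proof. by rewrite /multinom /FP divnK // FP_dvd. Qed.

Lemma FP_pos r : 0 < FP r.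
Proof. by rewrite /FP prodn_gt0 // => i; rewrite fact_gt0. Qed.

Lemma FP_dec r d : 1 <= d < size r -> 0 < nth 0 r d -> FP r = nth 0 r d * FP (dec r d).
Proof.
move=> hd pd; rewrite /FP size_dec; last lia.
rewrite (big_dec _ (fun i x => x`!)) // (big_at _ hd) /= mulnA; congr (_ * _).
by rewrite -(prednK pd) factS prednK.
Qed.

Lemma multinom_dec r d : 1 <= d < size r -> 0 < nth 0 r d ->
  nint r * multinom (dec r d) = nth 0 r d * multinom r.
Proof.
move=> hd pd; apply/eqP; rewrite -(eqn_pmul2r (FP_pos (dec r d))).
rewrite -mulnA multinomE [nth 0 r d * _]mulnC -mulnA -(FP_dec hd pd) multinomE nint_dec //.
have hn : 0 < nint r by rewrite /nint (big_at _ hd) /=; lia.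
by apply/eqP; rewrite -[in RHS](prednK hn) factS prednK.
Qed.

Lemma degprod_dec r d : 1 <= d < size r -> 0 < nth 0 r d ->
  degprod r = d * degprod (dec r d).
Proof.
move=> hd pd; rewrite /degprod size_dec; last lia.
rewrite (big_dec _ (fun i x => i ^ x)) // (big_at _ hd) /= mulnA; congr (_ * _).
by rewrite -expnS prednK.
Qed.

Lemma absz_ell_dec r d : 1 <= d < size r -> 0 < nth 0 r d -> (1 <= ell r)%R ->
  absz (ell (dec r d)) = absz (ell r) + d - 1.
Proof.
move=> hd pd he; rewrite ell_dec //.
have E : ell r = Posz (absz (ell r)) by rewrite gez0_abs // (le_trans _ he).
rewrite {1}E; set e := absz (ell r).
have h1 : 1 <= e + d by lia.
rewrite -PoszD -predn_int // absz_nat; lia.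
Qed.

Lemma Posz_sum (s : seq nat) (F : nat -> nat) :
  Posz (\sum_(i <- s) F i) = (\sum_(i <- s) Posz (F i))%R.
Proof. by elim: s => [|x s IH]; rewrite ?big_nil ?big_cons // PoszD IH. Qed.

Lemma ell_sum r : 0 < size r -> (1 <= ell r)%R ->
  absz (ell r) + \sum_(1 <= d < size r) d * nth 0 r d = nth 0 r 0 + nint r.
Proof.
move=> hs he; have E : ell r = (\sum_(0 <= d < size r) Posz (nth 0 r d) - \sum_(0 <= d < size r) Posz (d * nth 0 r d))%R.
  rewrite /ell -sumrN -sumrB; apply: eq_bigr => i _; rewrite PoszM; ring.
rewrite -!Posz_sum in E.
have S1 : \sum_(0 <= d < size r) nth 0 r d = nth 0 r 0 + \sum_(1 <= d < size r) nth 0 r d.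
  by rewrite big_ltn.
have S2 : \sum_(0 <= d < size r) d * nth 0 r d = \sum_(1 <= d < size r) d * nth 0 r d.
  by rewrite big_ltn // mul0n.
rewrite S1 S2 in E.
have E2 : ell r = Posz (absz (ell r)) by rewrite gez0_abs // (le_trans _ he).
rewrite /nint; move: E; rewrite {1}E2.
set A := \sum_(1 <= d < size r) _; set B := \sum_(1 <= d < size r) _.
move=> E; apply/eqP; rewrite -eqz_nat !PoszD E; apply/eqP; ring.
Qed.


Lemma nint0_nth r d : nint r = 0 -> 1 <= d -> nth 0 r d = 0.
Proof.
move=> h hd; case: (ltnP d (size r)) => hs; last by rewrite nth_default.
move: h; rewrite /nint (@big_at _ _ _ _ _ d) /=; lia.
Qed.

Lemma fdegs_nseq m : forest_degs (nseq m CLeaf) = nseq m 0.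
Proof. by elim: m => //= m IH; rewrite /forest_degs /= -/(forest_degs _) IH. Qed.

Lemma flabels_nseq m : forest_labels (nseq m CLeaf) = [::].
Proof. by elim: m => //= m IH; rewrite /forest_labels /= -/(forest_labels _) IH. Qed.

Lemma CF_nint0 r k : nint r = 0 -> card_is (CF r k) 1.
Proof.
move=> h0; apply: card_is_ext (card_is1 (nseq (nth 0 r 0) CLeaf)) => F; split.
- move=> ->; split.
  + move=> i; rewrite fdegs_nseq count_nseq; case: (posnP i) => [->|hi] /=.
      by rewrite mul1n.
    by case: i hi => [|i0] hi //; rewrite (@nint0_nth r i0.+1 h0).
  + by rewrite flabels_nseq.
  + by rewrite all_nseq orbT.
- case=> D _ A.
  have Z : all (fun x => x == 0) (forest_degs F).
    apply/allP => x hx; apply/negPn/negP => nz.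
    have := D x; rewrite nint0_nth //; last by lia.
    by move/eqP; rewrite -[_ == 0]negbK -lt0n -has_count has_pred1 hx.
  have EF : F = nseq (size F) CLeaf.
    elim: F A Z {D} => //= t F IH /andP [pt pF]; rewrite /forest_degs /= all_cat.
    case/andP=> Zt ZF; rewrite -IH //; case: t pt Zt => //= l c ch /andP [pos _] /andP [z _].
    by move: z pos; case: (size ch).
  move: (size F) EF => m EF; rewrite EF in D *; congr nseq.
  by have := D 0; rewrite fdegs_nseq count_nseq /= mul1n.
Qed.

Lemma Yq_nint0 r k q : nint r = 0 -> card_is (Yq r k q) 0.
Proof.
move=> h; apply: card_is0 => F [cf h1]; have := CF_size_labels cf; rewrite h.
move/eqP; rewrite size_eq0 => /eqP E.
have : 1 \in forest_labels F.
  case: (ltnP q (size F)) => hq; last by move: h1; rewrite nth_default.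
  rewrite /forest_labels -(cat_take_drop q F) (drop_nth CLeaf hq) map_cat flatten_cat mem_cat /=.
  by rewrite mem_cat h1 orbT.
by rewrite E.
Qed.


Definition Pk r k := \prod_(1 <= i < nint r) (nth 0 r 0 + i * (1 + k)).
Definition Yv r k := multinom r * degprod r * Pk r k.

Lemma nint0_multinom r : nint r = 0 -> multinom r = 1.
Proof. by move=> h; have := multinomE r; rewrite h => /eqP; rewrite muln_eq1 => /andP [/eqP]. Qed.

Lemma nint0_degprod r : nint r = 0 -> degprod r = 1.
Proof. by move=> h; rewrite /degprod big1_seq // => i /andP [_]; rewrite mem_index_iota => hi; rewrite nint0_nth //; case/andP: hi. Qed.

Lemma arith r k n (Cf Tv : nat -> nat) : nint r = n.+1 -> (1 <= ell r)%R ->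
  (forall d, Cf d = if n == 0 then 1 else absz (ell (dec r d)) * Yv (dec r d) k) ->
  (forall d, Tv d = if n == 0 then 0 else Yv (dec r d) k) ->
  \sum_(1 <= d < size r) (if 0 < nth 0 r d then d * Cf d + (nint r).-1 * (d + k) * (d * Tv d) else 0)
  = Yv r k.
Proof.
move=> hn he HC HT.
set M := multinom r; set Q := degprod r; set P' := \prod_(1 <= i < n) (nth 0 r 0 + i * (1 + k)).
set e := absz (ell r).
have he' : 1 <= e.
  by rewrite /e; have := he; case: (ell r) => //= m; rewrite lez_nat.
pose W d := if n == 0 then 1 else e.-1 + d + n * (d + k).
apply/eqP; rewrite -(eqn_pmul2l (ltn0Sn n)); apply/eqP; rewrite big_distrr /=.
have T : forall d, 1 <= d < size r ->
    n.+1 * (if 0 < nth 0 r d then d * Cf d + (nint r).-1 * (d + k) * (d * Tv d) else 0)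
    = nth 0 r d * (M * Q * P' * W d).
  move=> d hd; case: (posnP (nth 0 r d)) => [->|pd]; first by rewrite muln0 mul0n.
  have Md := multinom_dec hd pd; rewrite hn in Md.
  have Qd := degprod_dec hd pd.
  have Pd : Pk (dec r d) k = P'.
    by rewrite /Pk nint_dec // hn nth0_dec //; case/andP: hd.
  rewrite HC HT /W hn /=; rewrite -/M -/Q in Md Qd *.
  case: (eqVneq n 0) => [n0|nn0].
    subst n; rewrite /P' big_geq // mul1n muln1 mul0n mul0n addn0 !muln1.
    have := Md; rewrite nint0_multinom ?nint_dec ?hn // => /esym E.
    have Q1 : degprod (dec r d) = 1 by apply: nint0_degprod; rewrite nint_dec // hn.
    by rewrite Qd Q1 muln1 mulnA E !mul1n.
  rewrite /Yv Pd (absz_ell_dec hd pd he) -/e Qd.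
  have -> : e + d - 1 = e.-1 + d by lia.
  set M' := multinom (dec r d); set Q' := degprod (dec r d).
  have -> : nth 0 r d * (M * (d * Q') * P' * (e.-1 + d + n * (d + k)))
          = (nth 0 r d * M) * (d * Q' * P' * (e.-1 + d + n * (d + k))) by ring.
  rewrite -Md; ring.
rewrite (eq_big_nat _ _ T).
rewrite (eq_bigr (fun d => M * Q * P' * (nth 0 r d * W d))); last by move=> d _; ring.
rewrite -big_distrr /= /Yv /Pk hn -/M -/Q.
have hs : 0 < size r by case: (posnP (size r)) => // h; move: hn; rewrite /nint h big_geq.
case: (eqVneq n 0) => [n0|nn0].
  subst n; have -> : P' = 1 by rewrite /P' big_geq.
  rewrite [\prod_(1 <= i < 1) _]big_geq // /W /=.
  rewrite (eq_bigr (fun d => nth 0 r d)); last by move=> d _; rewrite muln1.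
  by rewrite -/(nint r) hn !muln1 mul1n.
rewrite big_nat_recr /= -/P'; last by lia.
have ES := ell_sum hs he; rewrite -/e hn in ES.
rewrite (eq_bigr (fun d => (e.-1 + n * k) * nth 0 r d + n.+1 * (d * nth 0 r d))); last first.
  by move=> d _; rewrite /W (negbTE nn0); ring.
rewrite big_split /= -!big_distrr /= -/(nint r) hn.
set B := \sum_(1 <= i < size r) i * nth 0 r i in ES *.
have -> : (e.-1 + n * k) * n.+1 + n.+1 * B = n.+1 * (nth 0 r 0 + n * (1 + k)).
  nia.
ring.
Qed.


Lemma mainY k n : forall r, nint r = n.+1 -> (1 <= ell r)%R -> card_is (Yq r k 0) (Yv r k).
Proof.
elim: n => [|m IH] r hn he.
- have := @card_Y0 r k (fun _ => 1) (fun d => d * 0) he.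
  rewrite (@arith r k 0 (fun _ => 1) (fun _ => 0)) //; apply.
  + move=> d hd pd; apply: CF_nint0; rewrite nint_dec // hn //.
  + move=> d hd pd; apply: card_Yt; first by rewrite ell_dec //; lia.
    by apply: Yq_nint0; rewrite nint_dec // hn.
- have := @card_Y0 r k (fun d => absz (ell (dec r d)) * Yv (dec r d) k)
            (fun d => d * Yv (dec r d) k) he.
  rewrite (@arith r k m.+1 (fun d => absz (ell (dec r d)) * Yv (dec r d) k)
            (fun d => Yv (dec r d) k)) //; apply.
  + move=> d hd pd; have hn' : nint (dec r d) = m.+1 by rewrite nint_dec // hn.
    have he' : (1 <= ell (dec r d))%R by rewrite ell_dec //; lia.
    apply: card_CF_Y; [by rewrite hn' | lia | exact: IH].
  + move=> d hd pd; have hn' : nint (dec r d) = m.+1 by rewrite nint_dec // hn.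
    have he' : (1 <= ell (dec r d))%R by rewrite ell_dec //; lia.
    apply: card_Yt; first by rewrite ell_dec //; lia.
    exact: IH.
Qed.

Unset Implicit Arguments.

Theorem proposition3p3 (r : seq nat) (k : nat) :
  (1 <= nint r)%N -> (1 <= ell r)%R ->
  exists N : nat, card_is (CF r k) N /\
    (N%:Z = (multinom r * degprod r *
             \prod_(1 <= i < nint r) (nth 0 r 0 + i * (1 + k)))%N%:Z * ell r)%R.
Proof.
move=> hn he; exists (absz (ell r) * Yv r k); split.
  apply: card_CF_Y => //; first lia.
  by apply: (@mainY k (nint r).-1); lia.
rewrite PoszM mulrC gez0_abs //; lia.
Qed.
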